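(* Let $m,n\in\mathbb N$. Then for all Banach spaces $X,Y$ and all bounded linear operators $T:X\to Y$, $$\tau(T|\mathcal H(\mathbb D_{m+1}^{m+n}))=\tau(T|\mathcal H(\mathbb D_1^n)).$$
   Context: Dyadic intervals: $\Delta_k^{(j)}:=[\frac{j-1}{2^k},\frac{j}{2^k})$. Haar functions: for $k\ge1$, integer $j$, $\chi_k^{(j)}(t)=+2^{(k-1)/2}$ on $\Delta_k^{(2j-1)}$, $-2^{(k-1)/2}$ on $\Delta_k^{(2j)}$, $0$ otherwise, $t\in[0,1)$. $\mathbb D_m^n:=\{(k,j):k=m,\dots,n;\ j=1,\dots,2^{k-1}\}$. For a finite set $\mathbb F$ of such indices and bounded linear $T:X\to Y$, $\tau(T|\mathcal H(\mathbb F))$ is the least $c\ge0$ such that $\|\sum_{(k,j)\in\mathbb F}Tx_k^{(j)}\chi_k^{(j)}|L_2\|\le c(\sum_{(k,j)\in\mathbb F}\|x_k^{(j)}\|^2)^{1/2}$ for all $x_k^{(j)}\in X$, where $\|\cdot|L_2\|$ is the Bochner $L_2([0,1),Y)$ norm. *)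

(* Defs.v *)
From HB Require Import structures.
From mathcomp Require Import all_boot all_order all_algebra.
From mathcomp Require Import all_classical all_reals all_analysis.
Set Implicit Arguments. Unset Strict Implicit. Unset Printing Implicit Defensive.
Import Order.TTheory GRing.Theory Num.Theory.
Import numFieldNormedType.Exports.
Local Open Scope classical_set_scope.
Local Open Scope ring_scope.

Section Haar.
Variable R : realType.

Definition dyadic (k i : nat) : set R :=
  `[ (i.-1)%:R / 2 ^+ k, i%:R / 2 ^+ k [%classic.

Definition haar (k j : nat) (t : R) : R :=
  if `[< dyadic k (2 * j).-1 t >] then Num.sqrt (2 ^+ k.-1)
  else if `[< dyadic k (2 * j) t >] then - Num.sqrt (2 ^+ k.-1)
  else 0.

Definition dyadic_indices (m n : nat) : seq (nat * nat) :=
  [seq (k, j) | k <- iota m (n.+1 - m), j <- iota 1 (2 ^ k.-1)].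

Variables (X Y : normedModType R).

Definition L2norm (f : R -> Y) : R :=
  Num.sqrt (fine (\int[lebesgue_measure]_(t in `[0%R, 1%R[%classic)
                    ((`|f t| ^+ 2)%:E))%E).

Definition haar_sum (T : X -> Y) (F : seq (nat * nat)) (x : nat * nat -> X)
  : R -> Y :=
  fun t => \sum_(p <- F) (haar p.1 p.2 t) *: T (x p).

Definition haar_tau (T : X -> Y) (F : seq (nat * nat)) : R :=
  inf [set c : R | 0 <= c /\ forall x : nat * nat -> X,
        L2norm (haar_sum T F x) <= c * Num.sqrt (\sum_(p <- F) `|x p| ^+ 2)].

End Haar.

(* Main.v *)
Require Import Defs.
From HB Require Import structures.
From mathcomp Require Import all_boot all_order all_algebra.
From mathcomp Require Import all_classical all_reals all_analysis.
From mathcomp Require Import measurable_realfun.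
From mathcomp Require Import ring lra zify.
Import Order.TTheory GRing.Theory Num.Theory.
Import numFieldNormedType.Exports.
Local Open Scope ring_scope.
Local Open Scope classical_set_scope.

Local Notation truncn := Num.truncn.
Section S.
Variable R : realType.

Lemma memC (N i : nat) (t : R) : 0 <= t ->
  (i%:R / 2^+N <= t < i.+1%:R / 2^+N) = (truncn (t * 2^+N) == i).
Proof.
move=> t0; have P0 : (0:R) < 2^+N by apply: exprn_gt0.
rewrite truncn_eq; last by rewrite mulr_ge0 // ltW.
by rewrite ler_pdivrMr // ltr_pdivlMr.
Qed.

Lemma step_integral (N : nat) (g : R -> R) (g0 : forall t, 0 <= g t)
  (hg : forall t, 0 <= t -> g t = g ((truncn (t * 2^+N))%:R / 2^+N)) :
  (\int[lebesgue_measure]_(t in `[0%R, 1%R[) (g t)%:E =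
   (\sum_(i < 2^N) g (i%:R / 2^+N) / 2^+N)%:E)%E.
Proof.
have P0 : (0:R) < 2^+N by apply: exprn_gt0.
pose C i : set R := `[i%:R / 2^+N, i.+1%:R / 2^+N[.
transitivity (\int[lebesgue_measure]_(t in `[0%R, 1%R[)
   (\sum_(i < 2^N) (g (i%:R / 2^+N) * \1_(C i) t)%:E))%E.
  apply: eq_integral => t; rewrite inE /= in_itv /= => /andP[t0 t1].
  have qlt : (truncn (t * 2^+N) < 2^N)%N.
    rewrite truncn_lt_nat; last by rewrite mulr_ge0 // ltW.
    rewrite natrX -[X in _ < X]mul1r ltr_pM2r //.
  rewrite (bigD1 (Ordinal qlt)) //= big1 ?adde0.
    by rewrite indicE /C mem_setE in_itv /= memC // eqxx mulr1 -hg.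
  move=> [i ilt] /= /eqP ne; rewrite indicE /C.
  have -> : (t \in `[i%:R / 2 ^+ N, i.+1%:R / 2 ^+ N[) = false.
    apply/negbTE; rewrite mem_setE in_itv /= memC //; apply/eqP => e; apply: ne.
    by apply: val_inj; rewrite /= e.
  by rewrite mulr0.
rewrite ge0_integral_sum //; last first.
- move=> i t _; rewrite lee_fin mulr_ge0 // indicE; exact: ler0n.
- move=> i; apply/measurable_EFinP; apply: measurable_funM.
    exact: measurable_cst.
  by apply: measurable_indic; exact: measurable_itv.
rewrite -sumEFin; apply: eq_bigr => i _.
have h := (@integralZl_indic _ _ _ lebesgue_measure _ (measurable_itv `[0%R, 1%R[%R) (fun _ => C i) (g (i%:R / 2^+N))); rewrite /= in h; rewrite h //; last first.
  exact: measurable_itv.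
  by move=> k; move: (g0 (i%:R / 2^+N)); rewrite leNgt k.
rewrite integral_indic //.
have -> : C i `&` `[0%R, 1%R[ = C i.
  apply/seteqP; split => t; first by case.
  move=> Ct; split => //; move: Ct; rewrite /C /= !in_itv /= => /andP[a b].
  apply/andP; split.
    by apply: le_trans a; rewrite divr_ge0 // ltW.
  apply: (lt_le_trans b); rewrite ler_pdivrMr // mul1r -natrX ler_nat.
  exact: ltn_ord.
set M := (X in (_ * X)%E).
have -> : M = ((i.+1%:R / 2^+N - i%:R / 2^+N)%:E)%E.
  have E := lebesgue_measure_itv (`[i%:R / 2 ^+ N, i.+1%:R / 2 ^+ N[%R : interval R).
  rewrite /= lte_fin ltr_pM2r ?invr_gt0 // ltr_nat ltnSn -EFinB in E.
  exact: E.
rewrite -EFinM -mulrBl -natrB // subSnn /=.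
by rewrite mul1r mulrC.
exact: measurable_itv.
Qed.

Lemma dyadicE (k N i : nat) (t : R) : (k <= N)%N -> 0 <= t ->
  `[< dyadic k i t >] =
  ((i.-1 * 2^(N-k) <= truncn (t * 2^+N)) && (truncn (t * 2^+N) < i * 2^(N-k)))%N.
Proof.
move=> kN t0.
have P0 : (0:R) < 2^+k by apply: exprn_gt0.
have EN : (2:R)^+N = 2^+(N-k) * 2^+k by rewrite -exprD subnK.
have u0 : 0 <= t * 2^+N by rewrite mulr_ge0 // exprn_ge0.
rewrite asboolb in_itv /= truncn_ge_nat // truncn_lt_nat //.
rewrite ler_pdivrMr // ltr_pdivlMr // !natrM natrX EN !mulrA.
have Q0 : (0:R) < 2^+(N-k) by apply: exprn_gt0.
by rewrite [t * _ * _]mulrAC ler_pM2r // ltr_pM2r.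
Qed.

Lemma haar_step k j N (t : R) : (k <= N)%N -> 0 <= t ->
  haar k j t = haar k j ((truncn (t * 2^+N))%:R / 2^+N).
Proof.
move=> kN t0.
have P0 : (0:R) < 2^+N by apply: exprn_gt0.
have q0 : (0:R) <= (truncn (t * 2^+N))%:R / 2^+N by rewrite divr_ge0 // ltW.
by rewrite /haar !(dyadicE _ _ _ _ kN t0) !(dyadicE _ _ _ _ kN q0) divfK ?gt_eqF // natrK.
Qed.

Lemma dyadic_mul k i (t : R) :
  `[< dyadic k i t >] = ((i.-1)%:R <= t * 2^+k < i%:R).
Proof.
have P0 : (0:R) < 2^+k by apply: exprn_gt0.
by rewrite asboolb in_itv /= ler_pdivrMr // ltr_pdivlMr.
Qed.

Lemma haar_shift m k (b b' j : nat) (s : R) : (0 < k)%N -> (j < 2^(k.-1))%N ->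
  0 <= s -> s < 1 ->
  haar (m+k) (b' * 2^(k.-1) + j.+1) ((b%:R + s) / 2^+m) =
  if b' == b then Num.sqrt (2^+m) * haar k j.+1 s else 0.
Proof.
move=> k0 jL s0 s1.
have Pm : (0:R) < 2^+m by apply: exprn_gt0.
have P0 : (0:R) < 2^+k by apply: exprn_gt0.
have ek : (2 ^ k = 2 * 2 ^ k.-1)%N by rewrite -expnS prednK.
have e1 : ((2 * (b' * 2 ^ k.-1 + j.+1)).-2 = b' * 2^k + 2 * j)%N.
  rewrite ?ek; move: (2 ^ k.-1)%N => L; nia.
have e2 : ((2 * (b' * 2 ^ k.-1 + j.+1)).-1 = b' * 2^k + 2 * j + 1)%N.
  rewrite ?ek; move: (2 ^ k.-1)%N => L; nia.
have e3 : ((2 * (b' * 2 ^ k.-1 + j.+1)) = b' * 2^k + 2 * j + 2)%N.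
  rewrite ?ek; move: (2 ^ k.-1)%N => L; nia.
have f1 : ((2 * j.+1).-2 = 2 * j)%N by lia.
have f2 : ((2 * j.+1).-1 = 2 * j + 1)%N by lia.
have f3 : ((2 * j.+1) = 2 * j + 2)%N by lia.
have ex : (b%:R + s) / 2 ^+ m * 2 ^+ (m + k) = b%:R * 2^+k + s * 2^+k.
  by rewrite exprD mulrA divfK ?gt_eqF // mulrDl.
rewrite /haar !dyadic_mul ex e1 e2 e3 f1 f2 f3.
rewrite !natrD !natrM natrX.
have sP0 : 0 <= s * 2^+k by rewrite mulr_ge0 // ltW.
have sP1 : s * 2^+k < 2^+k by rewrite -[X in _ < X]mul1r ltr_pM2r.
have jP : (2 * j + 2)%:R <= (2:R)^+k.
  rewrite -natrX ler_nat ek; lia.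
rewrite natrD natrM in jP.
move: sP0 sP1 jP; set P := (2:R)^+k => sP0 sP1 jP.
case: eqVneq => [->|ne].
  rewrite -!addrA !lerD2l !ltrD2l.
  have -> : (m + k).-1 = (m + k.-1)%N by rewrite -[k]prednK // addnS.
  rewrite exprD sqrtrM ?exprn_ge0 //.
  case: ifP => _; first by [].
  by case: ifP => _; rewrite ?mulrN ?mulr0.
have [lt|gt] : (b' < b)%N \/ (b < b')%N by lia.
  have : (b'.+1)%:R * P <= b%:R * P by rewrite ler_pM2r // ler_nat.
  rewrite -natr1 mulrDl mul1r => hb.
  case: ifP => [/andP[h1 h2]|_]; first by exfalso; lra.
  case: ifP => [/andP[h1 h2]|_] //; by exfalso; lra.
have : (b.+1)%:R * P <= b'%:R * P by rewrite ler_pM2r // ler_nat.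
rewrite -natr1 mulrDl mul1r => hb.
have j0 : (0:R) <= j%:R by apply: ler0n.
case: ifP => [/andP[h1 h2]|_]; first by exfalso; lra.
case: ifP => [/andP[h1 h2]|_] //; by exfalso; lra.
Qed.

Lemma sum_blocks (V : nmodType) a B L (f : nat -> V) :
  \sum_(j <- iota a (B * L)) f j = \sum_(b < B) \sum_(j <- iota a L) f (b * L + j)%N.
Proof.
elim: B => [|B IH]; first by rewrite mul0n big_nil big_ord0.
rewrite mulSnr iotaD big_cat IH big_ord_recr /=; congr (_ + _).
by rewrite addnC iotaDl big_map.
Qed.

Lemma sum_D (V : nmodType) a b (F : nat * nat -> V) :
  \sum_(p <- dyadic_indices a b) F p =
  \sum_(k <- iota a (b.+1 - a)%N) \sum_(j <- iota 1 (2^k.-1)%N) F (k, j).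
Proof. by rewrite /dyadic_indices big_allpairs_dep. Qed.

Lemma sum_big (V : nmodType) m n (G : nat * nat -> V) :
  \sum_(p <- dyadic_indices m.+1 (m + n)) G p =
  \sum_(b < (2^m)%N) \sum_(p <- dyadic_indices 1 n) G (m + p.1, b * 2^(p.1.-1) + p.2)%N.
Proof.
rewrite sum_D; under [RHS]eq_bigr do rewrite sum_D.
rewrite exchange_big /=.
have -> : ((m + n).+1 - m.+1 = n)%N by lia.
have -> : (n.+1 - 1 = n)%N by lia.
rewrite -addn1 iotaDl big_map big_seq [RHS]big_seq; apply: eq_bigr => k.
rewrite mem_iota => /andP[k1 _] /=.
have -> : (m + k).-1 = (m + k.-1)%N by rewrite -[k]prednK // addnS.
rewrite expnD sum_blocks; apply: eq_bigr => b _.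
by [].
Qed.

Lemma ord_iota (V : nmodType) N (F : nat -> V) :
  \sum_(i < N) F i = \sum_(i <- iota 0 N) F i.
Proof. by rewrite -(subn0 N) -/(index_iota 0 N) big_mkord subn0. Qed.

Lemma cells_split m n (g : R -> R) :
  \sum_(i < (2^(m+n))%N) g (i%:R / 2^+(m+n)) =
  \sum_(b < (2^m)%N) \sum_(r < (2^n)%N) g ((b%:R + r%:R / 2^+n) / 2^+m).
Proof.
rewrite (ord_iota _ _ (fun i => g (i%:R / 2^+(m+n)))) expnD sum_blocks.
apply: eq_bigr => b _; rewrite (ord_iota _ _ (fun r => g ((b%:R + r%:R / 2^+n) / 2^+m))).
apply: eq_bigr => r _; congr g.
have n0 : (2:R)^+n != 0 by rewrite expf_neq0 // pnatr_eq0.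
have m0 : (2:R)^+m != 0 by rewrite expf_neq0 // pnatr_eq0.
rewrite natrD natrM natrX exprD; field.
by rewrite m0 n0.
Qed.

Lemma mem_D a b (p : nat * nat) : p \in dyadic_indices a b ->
  [/\ (a <= p.1)%N, (p.1 <= b)%N, (1 <= p.2)%N & (p.2 <= 2^(p.1.-1))%N].
Proof.
move=> /allpairsPdep [k [j [hk hj ->]]] /=.
move: hk hj; rewrite !mem_iota => /andP[h1 h2] /andP[h3 h4]; split => //; lia.
Qed.

Variables (X Y : normedModType R) (T : X -> Y).

Definition Sn (n : nat) (f : R -> Y) : R :=
  \sum_(i < (2^n)%N) `|f (i%:R / 2^+n)| ^+ 2 / 2^+n.

Lemma haar_sum_step F x N t : (forall p, p \in F -> (p.1 <= N)%N) -> 0 <= t ->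
  haar_sum T F x t = haar_sum T F x ((truncn (t * 2^+N))%:R / 2^+N).
Proof.
move=> hF t0; rewrite /haar_sum; apply: eq_big_seq => p /hF pN.
by rewrite -haar_step.
Qed.

Lemma L2_step F x N : (forall p, p \in F -> (p.1 <= N)%N) ->
  L2norm (haar_sum T F x) = Num.sqrt (Sn N (haar_sum T F x)).
Proof.
move=> hF; rewrite /L2norm (step_integral N (fun t => `|haar_sum T F x t| ^+ 2)) //.
- by move=> t t0 /=; rewrite -haar_sum_step.
Qed.

Definition xb m (x : nat * nat -> X) (b : nat) :=
  fun p : nat * nat => x (m + p.1, b * 2^(p.1.-1) + p.2)%N.

Lemma haar_sum_shift m n x (b : 'I_(2^m)) s : 0 <= s -> s < 1 ->
  haar_sum T (dyadic_indices m.+1 (m+n)) x ((b%:R + s) / 2^+m) =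
  Num.sqrt (2^+m) *: haar_sum T (dyadic_indices 1 n) (xb m x b) s.
Proof.
move=> s0 s1; rewrite /haar_sum sum_big (bigD1 b) //= [X in _ + X]big1 ?addr0.
  rewrite scaler_sumr; apply: eq_big_seq => -[k j] /mem_D [/= k1 _ j1 jL].
  case: j j1 jL => [//|j] _ jL.
  by rewrite haar_shift // eqxx scalerA.
move=> b' nb; apply: big1_seq => -[k j] /mem_D [/= k1 _ j1 jL].
case: j j1 jL => [//|j] _ jL.
rewrite haar_shift //; case: eqP => [e|_]; last by rewrite scale0r.
by move: nb; rewrite (val_inj e) eqxx.
Qed.

Lemma S_big m n x :
  Sn (m + n) (haar_sum T (dyadic_indices m.+1 (m+n)) x) =
  \sum_(b < (2^m)%N) Sn n (haar_sum T (dyadic_indices 1 n) (xb m x b)).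
Proof.
rewrite /Sn (cells_split m n (fun t => `|haar_sum T (dyadic_indices m.+1 (m+n)) x t| ^+ 2 / 2^+(m+n))).
apply: eq_bigr => b _; apply: eq_bigr => r _.
have n0 : (0:R) < 2^+n by apply: exprn_gt0.
have m0 : (0:R) < 2^+m by apply: exprn_gt0.
have s0 : (0:R) <= r%:R / 2^+n by rewrite divr_ge0 // ltW.
have s1 : r%:R / 2^+n < 1 :> R by rewrite ltr_pdivrMr // mul1r -natrX ltr_nat.
rewrite haar_sum_shift // normrZ exprMn ger0_norm ?sqrtr_ge0 // sqr_sqrtr ?ltW //.
rewrite exprD; field.
by rewrite !gt_eqF.
Qed.

Lemma N_big m n x :
  \sum_(p <- dyadic_indices m.+1 (m+n)) `|x p| ^+ 2 =
  \sum_(b < (2^m)%N) \sum_(p <- dyadic_indices 1 n) `|xb m x b p| ^+ 2.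
Proof. by rewrite sum_big. Qed.

Lemma sqrt_le (c S N : R) : 0 <= c -> 0 <= N ->
  (Num.sqrt S <= c * Num.sqrt N) = (S <= c ^+ 2 * N).
Proof.
move=> c0 N0.
rewrite -[c in c * _](ger0_norm c0) -sqrtr_sqr -sqrtrM ?sqr_ge0 // ler_sqrt //.
by rewrite mulr_ge0 ?sqr_ge0.
Qed.

Lemma Sn_ge0 n f : 0 <= Sn n f.
Proof.
apply: sumr_ge0 => i _; rewrite divr_ge0 ?exprn_ge0 //.
Qed.

Lemma haar_sum_eq F y y' : {in F, y =1 y'} -> haar_sum T F y = haar_sum T F y'.
Proof.
move=> h; apply: funext => t; rewrite /haar_sum; apply: eq_big_seq => p /h -> //.
Qed.
Arguments haar_sum_eq [F y y'].

Lemma main_sets m n (T0 : T 0 = 0) :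
  [set c : R | 0 <= c /\ forall x, L2norm (haar_sum T (dyadic_indices m.+1 (m+n)) x)
      <= c * Num.sqrt (\sum_(p <- dyadic_indices m.+1 (m+n)) `|x p| ^+ 2)] =
  [set c : R | 0 <= c /\ forall x, L2norm (haar_sum T (dyadic_indices 1 n) x)
      <= c * Num.sqrt (\sum_(p <- dyadic_indices 1 n) `|x p| ^+ 2)].
Proof.
have hb x : L2norm (haar_sum T (dyadic_indices m.+1 (m+n)) x) =
    Num.sqrt (\sum_(b < (2^m)%N) Sn n (haar_sum T (dyadic_indices 1 n) (xb m x b))).
  by rewrite (L2_step _ _ (m+n)) ?S_big // => p /mem_D [].
have hs y : L2norm (haar_sum T (dyadic_indices 1 n) y) =
    Num.sqrt (Sn n (haar_sum T (dyadic_indices 1 n) y)).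
  by rewrite (L2_step _ _ n) // => p /mem_D [].
have N0 (F : seq (nat * nat)) (y : nat * nat -> X) : 0 <= \sum_(p <- F) `|y p| ^+ 2.
  by apply: sumr_ge0 => p _; apply: exprn_ge0.
apply/seteqP; split => c [c0 H]; split => // x.
  rewrite hs sqrt_le //.
  pose xg := fun p : nat * nat => if ((m < p.1) && (p.2 <= 2^((p.1 - m).-1)))%N
                                  then x (p.1 - m, p.2)%N else 0.
  have := H xg; rewrite hb N_big sqrt_le //; last first.
    by apply: sumr_ge0 => b _; apply: N0.
  have e0 : (0 < 2^m)%N by rewrite expn_gt0.
  have hx0 : {in dyadic_indices 1 n, xb m xg (Ordinal e0) =1 x}.
    move=> -[k j] /mem_D [/= k1 _ j1 jL]; rewrite /xb /xg /= mul0n add0n.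
    have -> : (m < m + k)%N by lia.
    have -> : (m + k - m = k)%N by lia.
    by rewrite jL.
  have hx1 (b : 'I_(2^m)) : b != Ordinal e0 ->
      {in dyadic_indices 1 n, xb m xg b =1 (fun _ => 0)}.
    move=> nb [k j] /mem_D [/= k1 _ j1 jL]; rewrite /xb /xg /=.
    have b1 : (0 < b)%N.
      by rewrite lt0n; apply: contra nb => /eqP b0; apply/eqP/val_inj.
    have -> : (m + k - m = k)%N by lia.
    have -> : (b * 2 ^ k.-1 + j <= 2 ^ k.-1)%N = false.
      have : (1 * 2^k.-1 <= b * 2^k.-1)%N by rewrite leq_mul2r b1 orbT.
      lia.
    by rewrite andbF.
  have Z0 : Sn n (haar_sum T (dyadic_indices 1 n) (fun _ => 0)) = 0.
    rewrite /Sn big1 // => i _; rewrite /haar_sum big1 ?normr0 ?expr0n ?mul0r //.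
    by move=> p _; rewrite T0 scaler0.
  rewrite (bigD1 (Ordinal e0)) //= [X in _ + X <= _]big1 ?addr0; last first.
    by move=> b nb; rewrite (haar_sum_eq (hx1 b nb)) Z0.
  rewrite (bigD1 (Ordinal e0)) //= [X in _ <= _ * (_ + X)]big1 ?addr0; last first.
    move=> b nb; rewrite (eq_big_seq (fun p => 0)) ?big1 // => p /(hx1 b nb) ->.
    by rewrite normr0 expr0n.
  by rewrite (haar_sum_eq hx0) (eq_big_seq (fun p => `|x p| ^+ 2)) // => p /hx0 ->.
rewrite hb N_big sqrt_le //; last by apply: sumr_ge0 => b _; apply: N0.
rewrite mulr_sumr; apply: ler_sum => b _.
by have := H (xb m x b); rewrite hs sqrt_le.
Qed.

End S.

Theorem corollary3p12 (R : realType) (m n : nat)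
  (X Y : completeNormedModType R) (T : {linear X -> Y})
  (hT : exists M : R, forall x : X, `|T x| <= M * `|x|) :
  haar_tau T (dyadic_indices (m.+1) (m + n)) = haar_tau T (dyadic_indices 1 n).
Proof.
by rewrite /haar_tau main_sets // linear0.
Qed.
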